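(* Let $D$ be a bounded complete domain quantified by a partial metric $p$ with values in $[0,1]$, and let $D_\infty$ be Scott's inverse-limit construction over $D$ (described in the context). For each $n$ fix an enumeration $(a^n_i)_{i\geq1}$ of a countable basis of $D_n$, and define partial metrics $p_0:=p$ on $D_0$, $p_{n+1}(f,g):=\sum_{i=1}^\infty 2^{-i}p_n\big(f(a^n_i),g(a^n_i)\big)$ on $D_{n+1}$, and on $D_\infty$ $$p_\infty(x,y):=\sum_{n=1}^\infty 2^{-n}p_n(x_n,y_n).$$ Then $p_\infty$ quantifies the Scott topology of $D_\infty$, i.e. $\mathcal O_\sigma(D_\infty)=\mathcal O_{p_\infty}(D_\infty)$.
   Context: A partial metric (PM) on $X$ is $p:X\times X\to[0,+\infty]$ with $p(x,x)\leq p(x,y)$; $p(x,x)=p(x,y)=p(y,y)\Rightarrow x=y$; $p(x,y)=p(y,x)$; $p(x,y)\leq p(x,z)+p(z,y)-p(z,z)$. Open balls $B^p_\epsilon(x)=\{y\mid p(y,x)<p(x,x)+\epsilon\}$; $\mathcal O_p(X)$ is the topology of unions of open balls; a dcpo is quantified by $p$ if its Scott topology equals $\mathcal O_p$. A domain is a continuous dcpo with a countable basis; bounded complete means every finite subset with an upper bound has a join. Construction: $D_0:=D$, $D_{n+1}:=$ the domain of Scott-continuous functions $D_n\to D_n$ (pointwise order). Maps $i_0(x):=\lambda y.x$, $j_0(f):=f(\bot)$, $i_{n+1}(f):=i_n\circ f\circ j_n$, $j_{n+1}(g):=j_n\circ g\circ i_n$ (so $j_n\circ i_n=\mathrm{id}$,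 $i_n\circ j_n\leq\mathrm{id}$). $D_\infty:=\{x\in\prod_{n\geq0}D_n\mid \forall n,\ x_n=j_n(x_{n+1})\}$ with componentwise order; $x_n$ denotes the $n$-th component of $x\in D_\infty$. *)

(* Defs.v *)
From Stdlib Require Import Reals List ClassicalEpsilon.
From Coquelicot Require Import Coquelicot.
Open Scope R_scope.

Record Poset := MkPoset { car :> Type; ord : car -> car -> Prop }.
Arguments ord {p} _ _.

Section Order.
Variable P : Poset.

Definition is_partial_order : Prop :=
  (forall x : P, ord x x) /\
  (forall x y : P, ord x y -> ord y x -> x = y) /\
  (forall x y z : P, ord x y -> ord y z -> ord x z).

Definition upper_bound (S : P -> Prop) (u : P) : Prop := forall x, S x -> ord x u.

Definition is_sup (S : P -> Prop) (s : P) : Prop :=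
  upper_bound S s /\ forall u, upper_bound S u -> ord s u.

Definition directed (S : P -> Prop) : Prop :=
  (exists x, S x) /\
  (forall x y, S x -> S y -> exists z, S z /\ ord x z /\ ord y z).

Definition is_dcpo : Prop :=
  is_partial_order /\ forall S, directed S -> exists s, is_sup S s.

Definition way_below (x y : P) : Prop :=
  forall S s, directed S -> is_sup S s -> ord y s -> exists d, S d /\ ord x d.

Definition is_basis (B : P -> Prop) : Prop :=
  forall x, directed (fun b => B b /\ way_below b x) /\
            is_sup (fun b => B b /\ way_below b x) x.

Definition countable_set (B : P -> Prop) : Prop :=
  exists e : nat -> P, forall b, B b -> exists n, e n = b.

Definition is_domain : Prop :=
  is_dcpo /\ exists B, countable_set B /\ is_basis B.

Definition bounded_complete : Prop :=
  forall l : list P, (exists u, upper_bound (fun x => In x l) u) ->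
                     exists s, is_sup (fun x => In x l) s.

Definition scott_open (U : P -> Prop) : Prop :=
  (forall x y, U x -> ord x y -> U y) /\
  (forall S s, directed S -> is_sup S s -> U s -> exists d, S d /\ U d).

Definition is_partial_metric (p : P -> P -> R) : Prop :=
  (forall x y, 0 <= p x y) /\
  (forall x y, p x x <= p x y) /\
  (forall x y, p x x = p x y -> p x y = p y y -> x = y) /\
  (forall x y, p x y = p y x) /\
  (forall x y z, p x y <= p x z + p z y - p z z).

Definition pball (p : P -> P -> R) (x : P) (eps : R) (y : P) : Prop :=
  p y x < p x x + eps.

Definition p_open (p : P -> P -> R) (U : P -> Prop) : Prop :=
  forall x, U x -> exists y eps, 0 < eps /\ pball p y eps x /\
                                 (forall z, pball p y eps z -> U z).

Definition quantifies (p : P -> P -> R) : Prop :=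
  is_partial_metric p /\ (forall U, scott_open U <-> p_open p U).

Definition scott_continuous (f : P -> P) : Prop :=
  forall S s, directed S -> is_sup S s ->
    is_sup (fun y => exists x, S x /\ y = f x) (f s).

End Order.

Lemma id_scott_continuous (P : Poset) : scott_continuous P (fun x => x).
Proof.
  intros S s _ [Hu Hl]; split.
  - intros y [x [Hx ->]]; auto.
  - intros u Hu'; apply Hl; intros x Hx; apply Hu'; eauto.
Qed.

Definition FunP (P : Poset) : Poset :=
  MkPoset {f : P -> P | scott_continuous P f}
          (fun f g => forall x, ord (proj1_sig f x) (proj1_sig g x)).

(** All maps to which this is applied
    below are Scott-continuous, so the (classical) fallback branch is never
    taken; it only serves to make the definitions total before the
    continuity proofs. *)
Definition mkfun (P : Poset) (f : P -> P) : FunP P :=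
  match excluded_middle_informative (scott_continuous P f) with
  | left H => exist _ f H
  | right _ => exist _ (fun x => x) (id_scott_continuous P)
  end.

Fixpoint Dn (D : Poset) (n : nat) : Poset :=
  match n with
  | O => D
  | S m => FunP (Dn D m)
  end.

Definition app {P : Poset} (f : FunP P) (x : P) : P := proj1_sig f x.

Fixpoint ij (D : Poset) (bot : D) (n : nat)
  : (Dn D n -> Dn D (S n)) * (Dn D (S n) -> Dn D n) :=
  match n return (Dn D n -> Dn D (S n)) * (Dn D (S n) -> Dn D n) with
  | O => (fun x : D => mkfun D (fun _ => x),
          fun f : FunP D => app f bot)
  | S m =>
      let i := fst (ij D bot m) in
      let j := snd (ij D bot m) in
      (fun f : FunP (Dn D m) => mkfun (Dn D (S m)) (fun y => i (app f (j y))),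
       fun g : FunP (Dn D (S m)) => mkfun (Dn D m) (fun y => j (app g (i y))))
  end.

Definition i_n (D : Poset) (bot : D) (n : nat) := fst (ij D bot n).
Definition j_n (D : Poset) (bot : D) (n : nat) := snd (ij D bot n).

Definition Dinf (D : Poset) (bot : D) : Poset :=
  MkPoset {x : forall n, Dn D n | forall n, x n = j_n D bot n (x (S n))}
          (fun x y => forall n, ord (proj1_sig x n) (proj1_sig y n)).

(** partial metrics p_n; [a n i] is a^n_{i+1} *)
Fixpoint pn (D : Poset) (p : D -> D -> R) (a : forall n, nat -> Dn D n) (n : nat)
  : Dn D n -> Dn D n -> R :=
  match n return Dn D n -> Dn D n -> R with
  | O => p
  | S m => fun f g =>
      Series (fun i => (/ 2) ^ (S i) * pn D p a m (app f (a m i)) (app g (a m i)))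
  end.

Definition pinf (D : Poset) (bot : D) (p : D -> D -> R) (a : forall n, nat -> Dn D n)
  (x y : Dinf D bot) : R :=
  Series (fun k => (/ 2) ^ (S k) *
                   pn D p a (S k) (proj1_sig x (S k)) (proj1_sig y (S k))).

(* Main.v *)
Require Import Defs.
From Stdlib Require Import Reals.
From Coquelicot Require Import Coquelicot.
From Stdlib Require Import Lra Lia ClassicalEpsilon FunctionalExtensionality ProofIrrelevance Classical.
Open Scope R_scope.

Definition W (u : nat -> R) : R := Series (fun i => (/ 2) ^ (S i) * u i).

Definition bnd (u : nat -> R) (M : R) := forall i, Rabs (u i) <= M.

Lemma pos_half_pow : forall i, 0 < (/2) ^ i.
Proof. intros; apply pow_lt; lra. Qed.

Lemma W_ex u M : bnd u M -> ex_series (fun i => (/ 2) ^ (S i) * u i).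
Proof.
  intros H. apply ex_series_Rabs.
  apply (ex_series_le (V := R_CompleteNormedModule) _ (fun i => (M / 2) * (/2) ^ i)).
  - intros n. change (Rabs (Rabs ((/2)^(S n) * u n)) <= M/2 * (/2)^n).
    rewrite Rabs_Rabsolu, Rabs_mult, (Rabs_pos_eq ((/2)^(S n))) by (left; apply (pos_half_pow (S n))).
    assert (H1 := H n). assert (H2 := pos_half_pow n).
    replace (M / 2 * (/ 2) ^ n) with ((/2) ^ (S n) * M) by (simpl; unfold Rdiv; ring).
    apply Rmult_le_compat_l. left; apply (pos_half_pow (S n)). exact H1.
  - apply (ex_series_scal_l (V := R_NormedModule) (M/2) (fun i => (/2)^i)).
    apply ex_series_geom. rewrite Rabs_pos_eq; lra.
Qed.

Lemma bnd_weaken u M M' : bnd u M -> M <= M' -> bnd u M'.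
Proof. intros H Hm i; specialize (H i); lra. Qed.

Lemma bnd01 u : (forall i, 0 <= u i <= 1) -> bnd u 1.
Proof. intros H i; specialize (H i); rewrite Rabs_pos_eq; lra. Qed.

Lemma W_plus u v M N : bnd u M -> bnd v N -> W (fun i => u i + v i) = W u + W v.
Proof.
  intros Hu Hv; unfold W. rewrite <- Series_plus by (eapply W_ex; eauto).
  apply Series_ext; intros; ring.
Qed.

Lemma W_minus u v M N : bnd u M -> bnd v N -> W (fun i => u i - v i) = W u - W v.
Proof.
  intros Hu Hv; unfold W. rewrite <- Series_minus by (eapply W_ex; eauto).
  apply Series_ext; intros; ring.
Qed.

Lemma W_scal k u : W (fun i => k * u i) = k * W u.
Proof.
  unfold W. rewrite <- Series_scal_l. apply Series_ext; intros; ring.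
Qed.

Lemma W_ext u v : (forall i, u i = v i) -> W u = W v.
Proof. intros H; unfold W; apply Series_ext; intros; rewrite H; ring. Qed.

Lemma W_nonneg u M : bnd u M -> (forall i, 0 <= u i) -> 0 <= W u.
Proof.
  intros Hb H. unfold W.
  replace 0 with (Series (fun i => 0 * ((/2) ^ (S i) * u i))).
  - apply Series_le; [|eapply W_ex; eauto].
    intros n; split; [lra|]. rewrite Rmult_0_l.
    apply Rmult_le_pos; [left; apply pos_half_pow | apply H].
  - rewrite Series_scal_l; ring.
Qed.

Lemma bnd_minus u v M N : bnd u M -> bnd v N -> bnd (fun i => u i - v i) (M + N).
Proof.
  intros Hu Hv i. unfold Rminus. eapply Rle_trans; [apply Rabs_triang|].
  rewrite Rabs_Ropp. specialize (Hu i); specialize (Hv i); lra.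
Qed.

Lemma bnd_plus u v M N : bnd u M -> bnd v N -> bnd (fun i => u i + v i) (M + N).
Proof.
  intros Hu Hv i. eapply Rle_trans; [apply Rabs_triang|].
  specialize (Hu i); specialize (Hv i); lra.
Qed.

Lemma W_le u v M N : bnd u M -> bnd v N -> (forall i, u i <= v i) -> W u <= W v.
Proof.
  intros Hu Hv H.
  assert (0 <= W (fun i => v i - u i)).
  { eapply W_nonneg. apply bnd_minus; eauto. intros i; specialize (H i); lra. }
  rewrite (W_minus _ _ _ _ Hv Hu) in H0. lra.
Qed.

Lemma W_shift u M : bnd u M -> W u = / 2 * u 0%nat + / 2 * W (fun k => u (S k)).
Proof.
  intros Hb. unfold W at 1. rewrite Series_incr_1 by (eapply W_ex; eauto).
  rewrite <- W_scal. unfold W. simpl. f_equal; [ring|].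
  apply Series_ext; intros; simpl; ring.
Qed.

Lemma bnd_shift u M : bnd u M -> bnd (fun k => u (S k)) M.
Proof. intros H i; apply H. Qed.

Lemma W_term u M : bnd u M -> (forall i, 0 <= u i) -> forall i, (/2) ^ (S i) * u i <= W u.
Proof.
  intros Hb Hp i. revert u Hb Hp. induction i; intros u Hb Hp.
  - rewrite (W_shift u M Hb). simpl.
    assert (0 <= W (fun k => u (S k))) by (eapply W_nonneg; [apply bnd_shift; eauto| intros; apply Hp]).
    lra.
  - rewrite (W_shift u M Hb).
    assert (H := IHi (fun k => u (S k)) (bnd_shift _ _ Hb) (fun k => Hp (S k))).
    assert (0 <= u 0%nat) by apply Hp.
    replace ((/ 2) ^ S (S i) * u (S i)) with (/2 * ((/ 2) ^ S i * u (S i))) by (simpl; ring).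
    lra.
Qed.

Lemma W_one : W (fun _ => 1) = 1.
Proof.
  unfold W. rewrite (Series_ext _ (fun i => /2 * (/2)^i)) by (intros; simpl; ring).
  rewrite Series_scal_l, Series_geom by (rewrite Rabs_pos_eq; lra). field.
Qed.

Definition gN (N : nat) (i : nat) : R := if Nat.leb N i then 1 else 0.

Lemma bnd_gN N : bnd (gN N) 1.
Proof. intros i; unfold gN; destruct (Nat.leb N i); rewrite ?Rabs_R1, ?Rabs_R0; lra. Qed.

Lemma W_gN N : W (gN N) = (/2) ^ N.
Proof.
  induction N.
  - transitivity (W (fun _ => 1)); [apply W_ext; intros; reflexivity | rewrite W_one; simpl; reflexivity].
  - rewrite (W_shift _ 1 (bnd_gN _)). unfold gN at 1; simpl.
    rewrite (W_ext _ (gN N)) by (intros; reflexivity). rewrite IHN. ring.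
Qed.

Lemma W_approx u v N eta : (forall i, 0 <= u i <= 1) -> (forall i, 0 <= v i <= 1) -> 0 <= eta ->
  (forall i, (i < N)%nat -> u i <= v i + eta) -> W u <= W v + eta + (/2) ^ N.
Proof.
  intros Hu Hv He H.
  assert (bu := bnd01 _ Hu). assert (bv := bnd01 _ Hv).
  assert (be : bnd (fun _ => eta) (Rabs eta)) by (intros i; apply Rle_refl).
  apply Rle_trans with (W (fun i => (v i + eta) + gN N i)).
  - apply (W_le _ _ _ _ bu (bnd_plus _ _ _ _ (bnd_plus _ _ _ _ bv be) (bnd_gN N))).
    intros i. unfold gN. destruct (Nat.leb N i) eqn:E.
    + apply Nat.leb_le in E. specialize (Hu i); specialize (Hv i); lra.
    + apply Nat.leb_gt in E. specialize (H i E); lra.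
  - rewrite (W_plus _ _ _ _ (bnd_plus _ _ _ _ bv be) (bnd_gN N)).
    rewrite (W_plus _ _ _ _ bv be), W_gN.
    replace (W (fun _ => eta)) with (eta * W (fun _ => 1)) by (rewrite <- W_scal; apply W_ext; intros; ring).
    rewrite W_one. lra.
Qed.

Lemma W_bounds u : (forall i, 0 <= u i <= 1) -> 0 <= W u <= 1.
Proof.
  intros H. split. eapply W_nonneg; [apply bnd01, H| intros i; apply H].
  rewrite <- W_one. apply (W_le _ _ _ _ (bnd01 _ H) (bnd01 (fun _ => 1) (fun _ => conj Rle_0_1 (Rle_refl 1)))).
  intros i; apply H.
Qed.

Lemma small_pow eps : 0 < eps -> exists N, (/2) ^ N < eps.
Proof.
  intros He. destruct (pow_lt_1_zero (/2) ltac:(rewrite Rabs_pos_eq; lra) eps He) as [N HN].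
  exists N. specialize (HN N (le_n _)). rewrite Rabs_pos_eq in HN by (left; apply pos_half_pow). exact HN.
Qed.


Definition cont (P Q : Poset) (f : P -> Q) : Prop :=
  forall S s, directed P S -> is_sup P S s ->
    is_sup Q (fun y => exists x, S x /\ y = f x) (f s).

Definition img {P Q : Poset} (f : P -> Q) (S : P -> Prop) : Q -> Prop :=
  fun y => exists x, S x /\ y = f x.

Definition joins (P : Poset) : Prop :=
  forall x y u : P, ord x u -> ord y u -> exists s, is_sup P (fun z => z = x \/ z = y) s.

Section Gen.
Variable P : Poset.
Hypothesis PO : is_partial_order P.

Lemma le_refl (x : P) : ord x x.
Proof. apply PO. Qed.
Lemma le_antisym (x y : P) : ord x y -> ord y x -> x = y.
Proof. apply PO. Qed.
Lemma le_trans (x y z : P) : ord x y -> ord y z -> ord x z.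
Proof. apply PO. Qed.

Lemma is_sup_ext (S S' : P -> Prop) s : (forall x, S x <-> S' x) -> is_sup P S s -> is_sup P S' s.
Proof.
  intros H [Hu Hl]; split.
  - intros x Hx; apply Hu, H, Hx.
  - intros u Hu'; apply Hl; intros x Hx; apply Hu', H, Hx.
Qed.

Lemma directed_ext (S S' : P -> Prop) : (forall x, S x <-> S' x) -> directed P S -> directed P S'.
Proof.
  intros H [[x Hx] Hd]; split.
  - exists x; apply H, Hx.
  - intros a b Ha Hb. destruct (Hd a b) as [z [Hz Hz']]; try apply H; auto.
    exists z; split; auto; apply H; auto.
Qed.

Lemma sup_unique S s t : is_sup P S s -> is_sup P S t -> s = t.
Proof.
  intros [Hs1 Hs2] [Ht1 Ht2]. apply le_antisym; auto.
Qed.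

Lemma pair_directed (x y : P) : ord x y -> directed P (fun z => z = x \/ z = y).
Proof.
  intros Hxy; split.
  - exists x; auto.
  - intros a b Ha Hb; exists y; split; [auto|].
    destruct Ha as [->| ->], Hb as [->| ->]; split; auto using le_refl.
Qed.

Lemma pair_sup (x y : P) : ord x y -> is_sup P (fun z => z = x \/ z = y) y.
Proof.
  intros Hxy; split.
  - intros z [->| ->]; auto using le_refl.
  - intros u Hu; apply Hu; auto.
Qed.

Lemma single_directed (x : P) : directed P (fun z => z = x).
Proof.
  split. exists x; auto. intros a b -> ->; exists x; split; auto; split; apply le_refl.
Qed.

Lemma single_sup (x : P) : is_sup P (fun z => z = x) x.
Proof.
  split. intros z ->; apply le_refl. intros u Hu; apply Hu; auto.
Qed.

Lemma wb_le (b x : P) : way_below P b x -> ord b x.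
Proof.
  intros H. destruct (H (fun z => z = x) x (single_directed x) (single_sup x) (le_refl x)) as [d [-> Hd]].
  exact Hd.
Qed.

Lemma wb_mono_l (b' b x : P) : ord b' b -> way_below P b x -> way_below P b' x.
Proof.
  intros H1 H2 S s HS Hs Hx. destruct (H2 S s HS Hs Hx) as [d [Hd Hbd]].
  exists d; split; auto. eapply le_trans; eauto.
Qed.

Lemma wb_mono_r (b x x' : P) : way_below P b x -> ord x x' -> way_below P b x'.
Proof.
  intros H1 H2 S s HS Hs Hx. apply (H1 S s HS Hs). eapply le_trans; eauto.
Qed.

Lemma wb_sup (b : P) S s : way_below P b s -> directed P S -> is_sup P S s -> exists d, S d /\ ord b d.
Proof. intros H HS Hs. apply (H S s HS Hs (le_refl s)). Qed.

Lemma interpolation (B : P -> Prop) : is_basis P B ->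
  forall b x, way_below P b x -> exists c, B c /\ way_below P b c /\ way_below P c x.
Proof.
  intros HB b x Hbx.
  set (T := fun d => B d /\ exists c, B c /\ way_below P d c /\ way_below P c x).
  assert (HT : directed P T).
  { split.
    - destruct (HB x) as [[[c [Bc Hc]] _] _].
      destruct (HB c) as [[[d [Bd Hd]] _] _].
      exists d; split; auto. exists c; auto.
    - intros d1 d2 [Bd1 [c1 [Bc1 [H1 H1']]]] [Bd2 [c2 [Bc2 [H2 H2']]]].
      destruct (HB x) as [[_ Hdx] _].
      destruct (Hdx c1 c2 (conj Bc1 H1') (conj Bc2 H2')) as [c3 [[Bc3 H3] [L1 L2]]].
      destruct (HB c3) as [Hdc3 Hsc3].
      destruct (wb_sup d1 _ _ (wb_mono_r _ _ _ H1 L1) Hdc3 Hsc3) as [e1 [[Be1 He1] Le1]].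
      destruct (wb_sup d2 _ _ (wb_mono_r _ _ _ H2 L2) Hdc3 Hsc3) as [e2 [[Be2 He2] Le2]].
      destruct (proj2 Hdc3 e1 e2 (conj Be1 He1) (conj Be2 He2)) as [e3 [[Be3 He3] [M1 M2]]].
      exists e3; split.
      + split; auto. exists c3; auto.
      + split; eapply le_trans; eauto. }
  assert (HsT : is_sup P T x).
  { split.
    - intros d [_ [c [_ [H1 H2]]]]. eapply le_trans; apply wb_le; eauto.
    - intros u Hu. destruct (HB x) as [_ [_ Hl]]. apply Hl.
      intros c [Bc Hc]. destruct (HB c) as [_ [_ Hl']]. apply Hl'.
      intros d [Bd Hd]. apply Hu. split; auto. exists c; auto. }
  destruct (wb_sup b T x Hbx HT HsT) as [d [[Bd [c [Bc [H1 H2]]]] Hbd]].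
  exists c; split; auto. split; auto. eapply wb_mono_l; eauto.
Qed.

End Gen.

Section Cont.

Lemma cont_mono (P Q : Poset) (f : P -> Q) : is_partial_order P -> cont P Q f ->
  forall x y, ord x y -> ord (f x) (f y).
Proof.
  intros PO Hf x y Hxy.
  destruct (Hf _ _ (pair_directed P PO x y Hxy) (pair_sup P PO x y Hxy)) as [Hu _].
  apply Hu. exists x; auto.
Qed.

Lemma directed_img (P Q : Poset) (f : P -> Q) S : is_partial_order P -> cont P Q f ->
  directed P S -> directed Q (img f S).
Proof.
  intros PO Hf [[x Hx] Hd]. split.
  - exists (f x), x; auto.
  - intros a b [x1 [H1 ->]] [x2 [H2 ->]].
    destruct (Hd x1 x2 H1 H2) as [z [Hz [L1 L2]]].
    exists (f z); split. exists z; auto. split; eapply cont_mono; eauto.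
Qed.

Lemma cont_comp (P Q R : Poset) (f : P -> Q) (g : Q -> R) :
  is_partial_order P -> is_partial_order Q -> is_partial_order R ->
  cont P Q f -> cont Q R g -> cont P R (fun x => g (f x)).
Proof.
  intros PO QO RO Hf Hg S s HS Hs.
  assert (H1 := Hf S s HS Hs).
  assert (H2 := Hg _ _ (directed_img P Q f S PO Hf HS) H1).
  eapply is_sup_ext; [| exact H2]; auto.
  intros y; split.
  - intros [z [[x [Hx ->]] ->]]. exists x; auto.
  - intros [x [Hx ->]]. exists (f x); split; auto. exists x; auto.
Qed.

Lemma cont_id (P : Poset) : cont P P (fun x => x).
Proof. apply id_scott_continuous. Qed.

End Cont.

Section Fun.
Variable P : Poset.
Hypothesis PO : is_partial_order P.

Lemma FunP_ext (f g : FunP P) : (forall x, app f x = app g x) -> f = g.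
Proof.
  destruct f as [f Hf], g as [g Hg]. unfold app; simpl. intros H.
  assert (f = g) by (apply functional_extensionality; auto). subst g.
  f_equal. apply proof_irrelevance.
Qed.

Lemma FunP_le_intro (f g : FunP P) : (forall x, ord (app f x) (app g x)) -> ord f g.
Proof. intros H; exact H. Qed.

Lemma FunP_PO : is_partial_order (FunP P).
Proof.
  split; [|split].
  - intros f x. apply le_refl; auto.
  - intros f g H1 H2. apply FunP_ext. intros x. apply (le_antisym P PO); [apply H1|apply H2].
  - intros f g h H1 H2 x. apply (le_trans P PO _ (app g x)); [apply H1| apply H2].
Qed.

Lemma app_mkfun (f : P -> P) : scott_continuous P f -> forall x, app (mkfun P f) x = f x.
Proof.
  intros Hf x. unfold mkfun. destruct (excluded_middle_informative (scott_continuous P f)).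
  reflexivity. contradiction.
Qed.

Lemma mkfun_app (w : FunP P) : mkfun P (app w) = w.
Proof.
  apply FunP_ext. intros x. apply app_mkfun. destruct w; exact s.
Qed.

Lemma app_cont (w : FunP P) : cont P P (app w).
Proof. destruct w; exact s. Qed.

Lemma app_mono (w : FunP P) x y : ord x y -> ord (app w x) (app w y).
Proof. apply cont_mono; auto. apply app_cont. Qed.

Lemma const_cont (Q : Poset) (c : Q) : is_partial_order Q -> cont P Q (fun _ => c).
Proof.
  intros QO S s [[x Hx] _] _. split.
  - intros y [z [_ ->]]. apply le_refl; auto.
  - intros u Hu. apply Hu. exists x; auto.
Qed.

Lemma app_le (f g : FunP P) x : ord f g -> ord (app f x) (app g x).
Proof. intros H; apply H. Qed.

Definition img_at (F : FunP P -> Prop) (x : P) : P -> Prop :=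
  fun y => exists f, F f /\ y = app f x.

Lemma directed_at F x : directed (FunP P) F -> directed P (img_at F x).
Proof.
  intros [[f Hf] Hd]. split.
  - exists (app f x), f; auto.
  - intros a b [f1 [H1 ->]] [f2 [H2 ->]]. destruct (Hd f1 f2 H1 H2) as [h [Hh [L1 L2]]].
    exists (app h x); split. exists h; auto. split; [apply L1| apply L2].
Qed.

Hypothesis DC : forall S, directed P S -> exists s, is_sup P S s.

Lemma psup_exists F : directed (FunP P) F ->
  exists s, is_sup (FunP P) F s /\ forall x, is_sup P (img_at F x) (app s x).
Proof.
  intros HF.
  set (sf := fun x => proj1_sig (constructive_indefinite_description _ (DC _ (directed_at F x HF)))).
  assert (Hsf : forall x, is_sup P (img_at F x) (sf x)).
  { intros x. unfold sf. destruct (constructive_indefinite_description _ _); simpl; auto. }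
  assert (Fmono : forall f, F f -> forall x, ord (app f x) (sf x)).
  { intros f Hf x. apply (Hsf x). exists f; auto. }
  assert (Hc : scott_continuous P sf).
  { intros S s HS Hs. split.
    - intros y [x [Hx ->]]. apply (Hsf x). intros z [f [Hf ->]].
      apply (le_trans P PO _ (app f s)). apply app_mono, Hs, Hx. apply Fmono; auto.
    - intros u Hu. apply (Hsf s). intros z [f [Hf ->]].
      destruct (app_cont f S s HS Hs) as [_ Hl]. apply Hl.
      intros y [x [Hx ->]]. apply (le_trans P PO _ (sf x)). apply Fmono; auto. apply Hu. exists x; auto. }
  exists (mkfun P sf).
  split.
  - split.
    + intros f Hf. apply FunP_le_intro; intros x. rewrite app_mkfun by auto. apply Fmono; auto.
    + intros u Hu. apply FunP_le_intro; intros x. rewrite app_mkfun by auto. apply (Hsf x). intros z [f [Hf ->]]. apply Hu; auto.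
  - intros x. rewrite app_mkfun by auto. auto.
Qed.

Lemma FunP_dcpo_sup F : directed (FunP P) F -> exists s, is_sup (FunP P) F s.
Proof. intros H. destruct (psup_exists F H) as [s [Hs _]]; eauto. Qed.

Lemma FunP_sup_pointwise F s : directed (FunP P) F -> is_sup (FunP P) F s ->
  forall x, is_sup P (img_at F x) (app s x).
Proof.
  intros HF Hs x. destruct (psup_exists F HF) as [t [Ht Hx]].
  rewrite (sup_unique _ FunP_PO F s t Hs Ht). auto.
Qed.

Lemma eval_cont (c : P) : cont (FunP P) P (fun w => app w c).
Proof.
  intros F s HF Hs. apply (FunP_sup_pointwise F s HF Hs c).
Qed.

Lemma FunP_bot (bt : P) : (forall x, ord bt x) -> forall f : FunP P, ord (mkfun P (fun _ => bt)) f.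
Proof.
  intros H f. apply FunP_le_intro; intros x. rewrite app_mkfun by (apply const_cont; auto). apply H.
Qed.

Hypothesis JN : joins P.

Lemma FunP_joins : joins (FunP P).
Proof.
  intros f g u Hf Hg.
  set (jf := fun x => proj1_sig (constructive_indefinite_description _ (JN (app f x) (app g x) (app u x) (Hf x) (Hg x)))).
  assert (Hj : forall x, is_sup P (fun z => z = app f x \/ z = app g x) (jf x)).
  { intros x; unfold jf; destruct (constructive_indefinite_description _ _); auto. }
  assert (Jf : forall x, ord (app f x) (jf x)) by (intros x; apply (Hj x); auto).
  assert (Jg : forall x, ord (app g x) (jf x)) by (intros x; apply (Hj x); auto).
  assert (Jl : forall x v, ord (app f x) v -> ord (app g x) v -> ord (jf x) v).
  { intros x v H1 H2. apply (Hj x). intros z [->| ->]; auto. }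
  assert (Hc : scott_continuous P jf).
  { intros S s HS Hs. split.
    - intros y [x [Hx ->]]. apply Jl.
      + apply (le_trans P PO _ (app f s)). apply app_mono, Hs, Hx. apply Jf.
      + apply (le_trans P PO _ (app g s)). apply app_mono, Hs, Hx. apply Jg.
    - intros v Hv. apply Jl.
      + destruct (app_cont f S s HS Hs) as [_ Hl]. apply Hl. intros y [x [Hx ->]].
        apply (le_trans P PO _ (jf x)). apply Jf. apply Hv. exists x; auto.
      + destruct (app_cont g S s HS Hs) as [_ Hl]. apply Hl. intros y [x [Hx ->]].
        apply (le_trans P PO _ (jf x)). apply Jg. apply Hv. exists x; auto. }
  exists (mkfun P jf). split.
  - intros z [->| ->]; apply FunP_le_intro; intros x; rewrite app_mkfun by auto; auto.
  - intros v Hv. apply FunP_le_intro; intros x. rewrite app_mkfun by auto. apply Jl; [apply Hv| apply Hv]; auto.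
Qed.

End Fun.

Lemma conj_inner_cont (P Q : Poset) (e : P -> Q) (e' : Q -> P) (w : FunP P) :
  is_partial_order P -> is_partial_order Q -> cont P Q e -> cont Q P e' ->
  scott_continuous Q (fun y => e (app w (e' y))).
Proof.
  intros PO QO He He'.
  apply (cont_comp Q P Q (fun y => app w (e' y)) e); auto.
  apply (cont_comp Q P P e' (app w)); auto. apply app_cont.
Qed.

Lemma conj_cont (P Q : Poset) (e : P -> Q) (e' : Q -> P) :
  is_partial_order P -> is_partial_order Q -> (forall S, directed P S -> exists s, is_sup P S s) ->
  cont P Q e -> cont Q P e' ->
  cont (FunP P) (FunP Q) (fun w => mkfun Q (fun y => e (app w (e' y)))).
Proof.
  intros PO QO DC He He' F s HF Hs.
  assert (HI := fun w => conj_inner_cont P Q e e' w PO QO He He').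
  split.
  - intros h [w [Hw ->]]. apply (FunP_le_intro Q); intros y. rewrite !app_mkfun by auto.
    apply (cont_mono P Q e PO He). apply Hs; auto.
  - intros u Hu. apply (FunP_le_intro Q); intros y. rewrite app_mkfun by auto.
    assert (H1 := FunP_sup_pointwise P PO DC F s HF Hs (e' y)).
    destruct (He _ _ (directed_at P F (e' y) HF) H1) as [_ Hl].
    apply Hl. intros z [x [[w [Hw ->]] ->]].
    assert (H2 : ord (app (mkfun Q (fun y0 => e (app w (e' y0)))) y) (app u y))
      by apply (Hu (mkfun Q (fun y0 => e (app w (e' y0)))) (ex_intro _ w (conj Hw eq_refl)) y).
    rewrite app_mkfun in H2 by auto. exact H2.
Qed.


Lemma cont_ext (P Q : Poset) (f g : P -> Q) : (forall x, f x = g x) -> cont P Q f -> cont P Q g.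
Proof.
  intros H Hf. assert (f = g) by (apply functional_extensionality; auto). subst; auto.
Qed.

Lemma mkfun_ext (P : Poset) (f g : P -> P) : (forall x, f x = g x) -> mkfun P f = mkfun P g.
Proof.
  intros H. assert (f = g) by (apply functional_extensionality; auto). subst; auto.
Qed.

Lemma constfun_cont (P Q : Poset) (g : P -> Q) : is_partial_order P -> is_partial_order Q ->
  cont P Q g -> cont P (FunP Q) (fun x => mkfun Q (fun _ => g x)).
Proof.
  intros PO QO Hg S s HS Hs.
  assert (Hc : forall x, scott_continuous Q (fun _ => g x)) by (intros; apply const_cont; auto).
  split.
  - intros h [x [Hx ->]]. apply (FunP_le_intro Q); intros y. rewrite !app_mkfun by auto.
    apply (cont_mono P Q g PO Hg). apply Hs, Hx.
  - intros u Hu. apply (FunP_le_intro Q); intros y. rewrite app_mkfun by auto.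
    destruct (Hg S s HS Hs) as [_ Hl]. apply Hl. intros z [x [Hx ->]].
    assert (H2 : ord (app (mkfun Q (fun _ => g x)) y) (app u y)) by (apply (Hu _ (ex_intro _ x (conj Hx eq_refl)))).
    rewrite app_mkfun in H2 by auto. exact H2.
Qed.

Section Levels.
Variable D : Poset.
Variable bot : D.
Hypothesis PO0 : is_partial_order D.
Hypothesis DC0 : forall S, directed D S -> exists s, is_sup D S s.
Hypothesis JN0 : joins D.
Hypothesis BOT0 : forall x : D, ord bot x.

Lemma Dn_props n : is_partial_order (Dn D n) /\ (forall S, directed (Dn D n) S -> exists s, is_sup (Dn D n) S s)
  /\ joins (Dn D n).
Proof.
  induction n as [|n [PO [DC JN]]].
  - auto.
  - simpl. split; [|split].
    + apply FunP_PO; auto.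
    + apply FunP_dcpo_sup; auto.
    + apply FunP_joins; auto.
Qed.

Lemma POn n : is_partial_order (Dn D n). Proof. apply Dn_props. Qed.
Lemma DCn n : forall S, directed (Dn D n) S -> exists s, is_sup (Dn D n) S s. Proof. apply Dn_props. Qed.
Lemma JNn n : joins (Dn D n). Proof. apply Dn_props. Qed.

Fixpoint botn (n : nat) : Dn D n :=
  match n return Dn D n with
  | O => bot
  | S m => mkfun (Dn D m) (fun _ => botn m)
  end.

Lemma botn_least n : forall x : Dn D n, ord (botn n) x.
Proof.
  induction n; simpl. exact BOT0. intros f. apply FunP_bot; auto. apply POn.
Qed.

Fixpoint E0 (k : nat) : (D -> Dn D k) * (Dn D k -> D) :=
  match k return (D -> Dn D k) * (Dn D k -> D) with
  | O => (fun x => x, fun x => x)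
  | S k' => (fun x => mkfun (Dn D k') (fun _ => fst (E0 k') x),
             fun v => snd (E0 k') (app v (fst (E0 k') bot)))
  end.

Fixpoint EP (n : nat) : forall k, (Dn D n -> Dn D k) * (Dn D k -> Dn D n) :=
  match n return forall k, (Dn D n -> Dn D k) * (Dn D k -> Dn D n) with
  | O => E0
  | S n' => fun k =>
     match k return (Dn D (S n') -> Dn D k) * (Dn D k -> Dn D (S n')) with
     | O => (fun w => fst (EP n' 0) (app w (snd (EP n' 0) bot)),
             fun x => mkfun (Dn D n') (fun _ => snd (EP n' 0) x))
     | S k' => (fun w => mkfun (Dn D k') (fun y => fst (EP n' k') (app w (snd (EP n' k') y))),
                fun v => mkfun (Dn D n') (fun y => snd (EP n' k') (app v (fst (EP n' k') y))))
     end
  end.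

Definition e n k : Dn D n -> Dn D k := fst (EP n k).

Lemma EP_swap : forall n k, (forall x, snd (EP n k) x = fst (EP k n) x) /\ (forall x, fst (EP n k) x = snd (EP k n) x).
Proof.
  induction n as [|n IH].
  - induction k as [|k [IH1 IH2]]; [split; reflexivity|]. split.
    + intros v. simpl. rewrite IH1, IH2. reflexivity.
    + intros x. simpl. apply mkfun_ext. intros _. rewrite IH2. reflexivity.
  - destruct k as [|k].
    + destruct (IH 0%nat) as [IH1 IH2]. split.
      * intros x. simpl. apply mkfun_ext. intros _. rewrite IH1. reflexivity.
      * intros w. simpl. rewrite IH1, IH2. reflexivity.
    + destruct (IH k) as [IH1 IH2]. split.
      * intros v. simpl. apply mkfun_ext. intros y. rewrite IH1, IH2. reflexivity.
      * intros w. simpl. apply mkfun_ext. intros y. rewrite IH1, IH2. reflexivity.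
Qed.

Lemma e_00 x : e 0 0 x = x. Proof. reflexivity. Qed.
Lemma e_0S k x : e 0 (S k) x = mkfun (Dn D k) (fun _ => e 0 k x). Proof. reflexivity. Qed.
Lemma e_S0 n w : e (S n) 0 w = e n 0 (app w (e 0 n bot)).
Proof. unfold e; simpl. rewrite (proj1 (EP_swap n 0)). reflexivity. Qed.
Lemma e_SS n k w : e (S n) (S k) w = mkfun (Dn D k) (fun y => e n k (app w (e k n y))).
Proof. unfold e; simpl. apply mkfun_ext; intros y. rewrite (proj1 (EP_swap n k)). reflexivity. Qed.

Lemma e_cont_all : forall n k, cont (Dn D n) (Dn D k) (e n k) /\ cont (Dn D k) (Dn D n) (e k n).
Proof.
  assert (CS0 : forall n, cont (Dn D n) D (e n 0) -> cont (Dn D (S n)) D (e (S n) 0)).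
  { intros n H. apply (cont_ext _ _ (fun w => e n 0 (app w (e 0 n bot)))); [intros; symmetry; apply e_S0|].
    apply (cont_comp (Dn D (S n)) (Dn D n) D (fun w => app w (e 0 n bot)) (e n 0)); auto using POn.
    apply eval_cont; auto using POn, DCn. }
  assert (C0S : forall n, cont D (Dn D n) (e 0 n) -> cont D (Dn D (S n)) (e 0 (S n))).
  { intros n H. apply (cont_ext _ _ (fun x => mkfun (Dn D n) (fun _ => e 0 n x))); [intros; reflexivity|].
    apply constfun_cont; auto using POn. }
  assert (CSS : forall n k, cont (Dn D n) (Dn D k) (e n k) -> cont (Dn D k) (Dn D n) (e k n) ->
                  cont (Dn D (S n)) (Dn D (S k)) (e (S n) (S k))).
  { intros n k H1 H2. apply (cont_ext _ _ (fun w => mkfun (Dn D k) (fun y => e n k (app w (e k n y))))).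
    intros; symmetry; apply e_SS.
    apply conj_cont; auto using POn, DCn. }
  induction n as [|n IH].
  - induction k as [|k [IH1 IH2]].
    + split; apply cont_id.
    + split; auto.
  - destruct k as [|k].
    + destruct (IH 0%nat); split; auto.
    + destruct (IH k); split; auto.
Qed.

Lemma e_cont n k : cont (Dn D n) (Dn D k) (e n k).
Proof. apply e_cont_all. Qed.

Lemma e_mono n k x y : ord x y -> ord (e n k x) (e n k y).
Proof. apply cont_mono. apply POn. apply e_cont. Qed.

Lemma e_SS_app n k w y : app (e (S n) (S k) w) y = e n k (app w (e k n y)).
Proof.
  rewrite e_SS. apply app_mkfun. apply conj_inner_cont; auto using POn, e_cont.
Qed.

Lemma e_0S_app k x y : app (e 0 (S k) x) y = e 0 k x.
Proof. rewrite e_0S. apply app_mkfun. apply const_cont, POn. Qed.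

Lemma e_nn n w : e n n w = w.
Proof.
  induction n. reflexivity.
  rewrite e_SS. transitivity (mkfun (Dn D n) (app w)); [apply mkfun_ext; intros y; rewrite !IHn; reflexivity | apply mkfun_app].
Qed.

Lemma e_laws : forall n k, (forall w, e (S k) k (e n (S k) w) = e n k w) /\
                           (forall w, e (S k) n (e k (S k) w) = e k n w).
Proof.
  induction n as [|n IH].
  - induction k as [|k [IH1 IH2]].
    + split; intros w; rewrite (e_S0 0), (e_0S_app 0 w); reflexivity.
    + split.
      * intros x. rewrite (e_SS (S k) k), (e_0S k). apply mkfun_ext. intros y.
        rewrite (e_0S_app (S k) x), IH1. reflexivity.
      * intros w. rewrite (e_S0 (S k)), (e_SS_app k (S k)), IH2, IH1, (e_S0 k). reflexivity.
  - destruct k as [|k].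
    + split.
      * intros w. rewrite (e_S0 0), (e_SS_app n 0), (e_S0 n). reflexivity.
      * intros x. rewrite (e_SS 0 n), (e_0S n). apply mkfun_ext. intros y. rewrite (e_0S_app 0 x). reflexivity.
    + destruct (IH k) as [IH1 IH2]. split.
      * intros w. rewrite (e_SS (S k) k), (e_SS n k). apply mkfun_ext. intros y.
        rewrite (e_SS_app n (S k)), IH1, IH2. reflexivity.
      * intros w. rewrite (e_SS (S k) n), (e_SS k n). apply mkfun_ext. intros y.
        rewrite (e_SS_app k (S k)), IH2, IH1. reflexivity.
Qed.

Lemma e_post n k w : e (S k) k (e n (S k) w) = e n k w. Proof. apply e_laws. Qed.
Lemma e_pre m n w : e (S m) n (e m (S m) w) = e m n w. Proof. apply e_laws. Qed.

Lemma ij_e : forall n, (forall x, i_n D bot n x = e n (S n) x) /\ (forall x, j_n D bot n x = e (S n) n x).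
Proof.
  induction n as [|n [IH1 IH2]].
  - split; intros x; [reflexivity|]. rewrite e_S0. reflexivity.
  - split; intros x.
    + change (i_n D bot (S n) x) with (mkfun (Dn D (S n)) (fun y => i_n D bot n (app x (j_n D bot n y)))).
      rewrite (e_SS n (S n)). apply (mkfun_ext (Dn D (S n))). intros y. rewrite IH1, IH2. reflexivity.
    + change (j_n D bot (S n) x) with (mkfun (Dn D n) (fun y => j_n D bot n (app x (i_n D bot n y)))).
      rewrite (e_SS (S n) n). apply (mkfun_ext (Dn D n)). intros y. rewrite IH1, IH2. reflexivity.
Qed.

Lemma j_e n x : j_n D bot n x = e (S n) n x. Proof. apply ij_e. Qed.

Lemma ij_le n f : ord (e n (S n) (e (S n) n f)) f.
Proof.
  induction n.
  - apply (FunP_le_intro D). intros y. rewrite (e_0S_app 0), (e_S0 0). simpl.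
    apply app_mono; auto.
  - apply (FunP_le_intro (Dn D (S n))). intros y. rewrite (e_SS_app n (S n)), (e_SS_app (S n) n).
    apply (le_trans _ (POn (S n)) _ (app f (e n (S n) (e (S n) n y)))).
    + apply IHn.
    + apply app_mono. apply POn. apply IHn.
Qed.

End Levels.


Section WFam.
Variable X : Type.
Variable q : nat -> X -> X -> R.
Hypothesis q01 : forall i x y, 0 <= q i x y <= 1.

Definition Qf (x y : X) : R := W (fun i => q i x y).

Lemma Qf_bounds x y : 0 <= Qf x y <= 1.
Proof. apply W_bounds. intros; apply q01. Qed.

Lemma qb i x y : Rabs (q i x y) <= 1.
Proof. specialize (q01 i x y). rewrite Rabs_pos_eq; lra. Qed.

Lemma bq x y : bnd (fun i => q i x y) 1.
Proof. intro i; apply qb. Qed.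

Lemma Qf_le (x y x' y' : X) : (forall i, q i x y <= q i x' y') -> Qf x y <= Qf x' y'.
Proof. intros H. apply (W_le _ _ 1 1); auto; apply bq. Qed.

Lemma Qf_diff_term x y x' y' : (forall i, q i x' y' <= q i x y) ->
  forall i, (/2) ^ (S i) * (q i x y - q i x' y') <= Qf x y - Qf x' y'.
Proof.
  intros H i. unfold Qf. rewrite <- (W_minus _ _ 1 1) by apply bq.
  apply (W_term (fun j => q j x y - q j x' y') 2). apply (bnd_minus _ _ 1 1); apply bq.
  intros j; specialize (H j); lra.
Qed.

Lemma Qf_eq_term x y x' y' : (forall i, q i x' y' <= q i x y) -> Qf x y = Qf x' y' ->
  forall i, q i x y = q i x' y'.
Proof.
  intros H E i. assert (H1 := Qf_diff_term x y x' y' H i). rewrite E in H1.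
  assert (H2 := pos_half_pow (S i)). specialize (H i).
  assert (q i x y - q i x' y' <= 0).
  { destruct (Rle_dec (q i x y - q i x' y') 0); auto.
    assert (0 < (/ 2) ^ S i * (q i x y - q i x' y')) by (apply Rmult_lt_0_compat; lra). lra. }
  lra.
Qed.

Lemma Qf_triangle (x y z : X) : (forall i, q i x y <= q i x z + q i z y - q i z z) ->
  Qf x y <= Qf x z + Qf z y - Qf z z.
Proof.
  intros H. unfold Qf.
  rewrite <- (W_plus _ _ 1 1) by apply bq.
  rewrite <- (W_minus _ _ 2 1) by (try apply (bnd_plus _ _ 1 1); apply bq).
  apply (W_le _ _ 1 (1 + 1 + 1)). apply bq.
  apply (bnd_minus (fun i => q i x z + q i z y) _ (1+1) 1); [apply (bnd_plus _ _ 1 1)|]; apply bq.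
  exact H.
Qed.

Lemma Qf_supcont (le : X -> X -> Prop) (S : X -> Prop) (s z : X) :
  (exists x, S x) -> (forall x y, S x -> S y -> exists w, S w /\ le x w /\ le y w) ->
  (forall x y i, le x y -> q i y z <= q i x z) ->
  (forall i eps, 0 < eps -> exists x, S x /\ q i x z < q i s z + eps) ->
  forall eps, 0 < eps -> exists x, S x /\ Qf x z < Qf s z + eps.
Proof.
  intros [x0 Hx0] Hd Hmono Hc eps Heps.
  destruct (small_pow (eps / 2)) as [N HN]; [lra|].
  assert (Hfin : forall N, exists x, S x /\ forall i, (i < N)%nat -> q i x z <= q i s z + eps / 2).
  { induction N0 as [|N0 [x1 [Hx1 H1]]].
    - exists x0; split; auto; intros; lia.
    - destruct (Hc N0 (eps/2)) as [x2 [Hx2 H2]]; [lra|].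
      destruct (Hd x1 x2 Hx1 Hx2) as [x3 [Hx3 [L1 L2]]].
      exists x3; split; auto. intros i Hi.
      destruct (Nat.eq_dec i N0) as [->|Hne].
      + specialize (Hmono _ _ N0 L2). lra.
      + specialize (Hmono _ _ i L1). specialize (H1 i ltac:(lia)). lra. }
  destruct (Hfin N) as [x [Hx H]]. exists x; split; auto.
  assert (W (fun i => q i x z) <= W (fun i => q i s z) + eps / 2 + (/ 2) ^ N).
  { apply W_approx; intros; try apply q01; auto. lra. }
  unfold Qf. lra.
Qed.

End WFam.

Section Level0.
Variable P : Poset.
Variable q : P -> P -> R.
Hypothesis PO : is_partial_order P.
Hypothesis Qq : quantifies P q.

Lemma ball_popen c r : p_open P q (pball P q c r).
Proof.
  destruct Qq as [[H1 [H2 [H3 [H4 H5]]]] _].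
  intros x Hx. unfold pball in Hx. exists x, (q c c + r - q x c). split; [lra|]. split.
  - unfold pball. lra.
  - intros z Hz. unfold pball in *. specialize (H5 z c x). lra.
Qed.

Lemma ball_scott c r : scott_open P (pball P q c r).
Proof. apply (proj2 Qq). apply ball_popen. Qed.

Lemma q_antitone x y z : ord x y -> q y z <= q x z.
Proof.
  intros Hxy. destruct Qq as [[H1 [H2 [H3 [H4 H5]]]] _].
  destruct (Rle_dec (q y z) (q x z)) as [|Hn]; auto. exfalso.
  set (r := (q x z + q y z) / 2 - q z z).
  assert (Hx : pball P q z r x) by (unfold pball, r; lra).
  destruct (ball_scott z r) as [Hup _].
  assert (Hy := Hup x y Hx Hxy). unfold pball, r in Hy. lra.
Qed.

Lemma q_supcont S s z eps : directed P S -> is_sup P S s -> 0 < eps ->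
  exists d, S d /\ q d z < q s z + eps.
Proof.
  intros HS Hs He. destruct Qq as [[H1 [H2 [H3 [H4 H5]]]] _].
  destruct (ball_scott z (q s z - q z z + eps)) as [_ Hin].
  destruct (Hin S s HS Hs) as [d [Hd Hb]].
  - unfold pball. lra.
  - exists d; split; auto. unfold pball in Hb. lra.
Qed.

Lemma q_L (B : P -> Prop) : is_basis P B -> forall b x, way_below P b x ->
  exists dl, 0 < dl /\ forall z, q z x < q x x + dl -> ord b z.
Proof.
  intros HB b x Hbx. destruct Qq as [[H1 [H2 [H3 [H4 H5]]]] HQ].
  assert (Ho : scott_open P (way_below P b)).
  { split.
    - intros u v Hu Huv. eapply wb_mono_r; eauto.
    - intros S s HS Hs Hb. destruct (interpolation P PO B HB b s Hb) as [c [_ [Hbc Hcs]]].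
      destruct (wb_sup P PO c S s Hcs HS Hs) as [d [Hd Hcd]].
      exists d; split; auto. eapply wb_mono_r; eauto. }
  destruct (proj1 (HQ _) Ho x Hbx) as [y [eps [He [Hx Hsub]]]].
  unfold pball in Hx. exists (q y y + eps - q x y). split; [lra|].
  intros z Hz. apply (wb_le P PO). apply Hsub. unfold pball. specialize (H5 z y x). lra.
Qed.

End Level0.

Definition PMprops (P : Poset) (q : P -> P -> R) : Prop :=
  (forall x y, 0 <= q x y <= 1) /\
  is_partial_metric P q /\
  (forall x y z, ord x y -> q y z <= q x z) /\
  (forall S s z eps, directed P S -> is_sup P S s -> 0 < eps -> exists d, S d /\ q d z < q s z + eps) /\
  (forall b x, way_below P b x -> exists dl, 0 < dl /\ forall z, q z x < q x x + dl -> ord b z).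

Section FunLevel.
Variable P : Poset.
Variable q : P -> P -> R.
Variable en : nat -> P.
Variable bt : P.
Hypothesis PO : is_partial_order P.
Hypothesis DC : forall S, directed P S -> exists s, is_sup P S s.
Hypothesis JN : joins P.
Hypothesis BT : forall x : P, ord bt x.
Hypothesis BAS : is_basis P (fun b => exists i, en i = b).
Hypothesis PMq : PMprops P q.

Definition qi (i : nat) (f g : FunP P) : R := q (app f (en i)) (app g (en i)).
Definition qS (f g : FunP P) : R := Qf (FunP P) qi f g.

Lemma qi01 i f g : 0 <= qi i f g <= 1.
Proof. apply PMq. Qed.

Lemma fun_basis_ext (f g : FunP P) : (forall i, app f (en i) = app g (en i)) -> f = g.
Proof.
  intros H. apply FunP_ext. intros x.
  destruct (BAS x) as [Hd Hs].
  assert (H1 := app_cont P f _ _ Hd Hs). assert (H2 := app_cont P g _ _ Hd Hs).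
  apply (sup_unique P PO _ _ _ H1).
  eapply is_sup_ext; [|exact H2]. auto.
  intros y; split; intros [b [[[i <-] Hb] ->]]; exists (en i); (split; [split; eauto|]); rewrite H; auto.
Qed.

Lemma qS_pm : is_partial_metric (FunP P) qS.
Proof.
  destruct PMq as [Q01 [[H1 [H2 [H3 [H4 H5]]]] _]].
  split; [|split; [|split; [|split]]].
  - intros; apply Qf_bounds, qi01.
  - intros f g. apply Qf_le. apply qi01. intros i; apply H2.
  - intros f g E1 E2.
    assert (T1 := Qf_eq_term _ qi qi01 f g f f (fun i => H2 _ _) (eq_sym E1)).
    assert (Hgg : forall i, qi i g g <= qi i f g).
    { intros i; unfold qi. rewrite (H4 (app f (en i)) (app g (en i))). apply H2. }
    assert (T2 := Qf_eq_term _ qi qi01 f g g g Hgg E2).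
    apply fun_basis_ext. intros i. apply (H3 (app f (en i)) (app g (en i))).
    + symmetry; apply (T1 i).
    + apply (T2 i).
  - intros f g. unfold qS, Qf. apply W_ext. intros i. apply H4.
  - intros f g h. apply Qf_triangle. apply qi01. intros i. apply H5.
Qed.

Lemma qS_antitone f g h : ord f g -> qS g h <= qS f h.
Proof.
  intros Hfg. apply Qf_le. apply qi01. intros i. unfold qi. apply PMq. apply Hfg.
Qed.

Lemma qS_supcont F s h eps : directed (FunP P) F -> is_sup (FunP P) F s -> 0 < eps ->
  exists d, F d /\ qS d h < qS s h + eps.
Proof.
  intros HF Hs He. apply (Qf_supcont _ qi qi01 (@ord (FunP P))); auto.
  - apply HF.
  - apply HF.
  - intros f g i Hfg. unfold qi. apply PMq. apply Hfg.
  - intros i e He'. 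
    destruct (proj1 (proj2 (proj2 (proj2 PMq))) _ _ (app h (en i)) e (directed_at P F (en i) HF)
       (FunP_sup_pointwise P PO DC F s HF Hs (en i)) He') as [d [[f [Hf ->]] Hd]].
    exists f; split; auto.
Qed.

Definition stepf (i : nat) (c : P) : P -> P :=
  fun y => if excluded_middle_informative (way_below P (en i) y) then c else bt.

Lemma stepf_cont i c : scott_continuous P (stepf i c).
Proof.
  intros S s HS Hs. unfold stepf at 2.
  destruct (excluded_middle_informative (way_below P (en i) s)) as [Hw|Hw].
  - destruct (interpolation P PO _ BAS _ _ Hw) as [c' [_ [H1 H2]]].
    destruct (wb_sup P PO c' S s H2 HS Hs) as [d [Hd Hc'd]].
    assert (Hid : way_below P (en i) d) by (eapply wb_mono_r; eauto).
    split.
    + intros y [x [Hx ->]]. unfold stepf. destruct (excluded_middle_informative _); auto using le_refl.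
    + intros u Hu. assert (Hu' := Hu (stepf i c d) (ex_intro _ d (conj Hd eq_refl))).
      unfold stepf in Hu'. destruct (excluded_middle_informative _); [auto|contradiction].
  - split.
    + intros y [x [Hx ->]]. unfold stepf. destruct (excluded_middle_informative _) as [Hw'|]; auto using le_refl.
      exfalso. apply Hw. eapply wb_mono_r; eauto. apply Hs; auto.
    + intros u Hu. apply BT.
Qed.

Definition step (i : nat) (c : P) : FunP P := mkfun P (stepf i c).

Lemma step_app i c y : app (step i c) y = stepf i c y.
Proof. apply app_mkfun, stepf_cont. Qed.

Lemma step_le i c (g : FunP P) : ord c (app g (en i)) -> ord (step i c) g.
Proof.
  intros H. apply FunP_le_intro. intros y. rewrite step_app. unfold stepf.
  destruct (excluded_middle_informative _) as [Hw|]; auto.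
  apply (le_trans P PO _ _ _ H). apply app_mono; auto. apply (wb_le P PO); auto.
Qed.

Definition Hset (f : FunP P) (h : FunP P) : Prop :=
  ord h f /\ exists l : list (nat * P),
    (forall ic, List.In ic l -> way_below P (snd ic) (app f (en (fst ic)))) /\
    (forall g : FunP P, (forall ic, List.In ic l -> ord (snd ic) (app g (en (fst ic)))) -> ord h g).

Lemma Hset_directed f : directed (FunP P) (Hset f).
Proof.
  split.
  - exists (mkfun P (fun _ => bt)). split. apply FunP_bot; auto.
    exists nil. split. intros ic []. intros g _. apply FunP_bot; auto.
  - intros h1 h2 [L1 [l1 [A1 B1]]] [L2 [l2 [A2 B2]]].
    destruct (FunP_joins P PO JN h1 h2 f L1 L2) as [s [Hu Hl]].
    exists s. split; [split|split; apply Hu; auto].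
    + apply Hl. intros z [->| ->]; auto.
    + exists (List.app l1 l2). split.
      * intros ic Hic. apply List.in_app_or in Hic. destruct Hic; auto.
      * intros g Hg. apply Hl. intros z [->| ->].
        apply B1; intros; apply Hg, List.in_or_app; auto.
        apply B2; intros; apply Hg, List.in_or_app; auto.
Qed.

Lemma Hset_sup f : is_sup (FunP P) (Hset f) f.
Proof.
  split.
  - intros h [H _]; auto.
  - intros u Hu. apply FunP_le_intro. intros x.
    destruct (BAS x) as [Hd Hs].
    destruct (app_cont P f _ _ Hd Hs) as [_ Hl]. apply Hl.
    intros y [b [[[i <-] Hb] ->]].
    destruct (BAS (app f (en i))) as [Hd' Hs']. apply (proj2 Hs').
    intros c [_ Hc].
    assert (Hst : Hset f (step i c)).
    { split. apply step_le. apply (wb_le P PO); auto.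
      exists (cons (i, c) nil). split.
      - intros ic [<-|[]]. auto.
      - intros g Hg. apply step_le. apply (Hg (i, c)). left; auto. }
    assert (H := Hu _ Hst x). change (ord (app (step i c) x) (app u x)) in H.
    rewrite step_app in H. unfold stepf in H.
    destruct (excluded_middle_informative _); [auto|contradiction].
Qed.

Lemma qS_term (g f : FunP P) i : (/2) ^ (S i) * (q (app g (en i)) (app f (en i)) - q (app f (en i)) (app f (en i)))
   <= qS g f - qS f f.
Proof.
  destruct PMq as [_ [[H1 [H2 [H3 [H4 H5]]]] _]].
  apply (Qf_diff_term _ qi qi01 g f f f). intros j. unfold qi. rewrite (H4 (app g (en j))). apply H2.
Qed.

Lemma list_delta (f : FunP P) (l : list (nat * P)) :
  (forall ic, List.In ic l -> way_below P (snd ic) (app f (en (fst ic)))) ->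
  exists dl, 0 < dl /\ forall g, qS g f < qS f f + dl ->
     forall ic, List.In ic l -> ord (snd ic) (app g (en (fst ic))).
Proof.
  induction l as [|[i c] l IH]; intros Hl.
  - exists 1; split; [lra|]. intros g _ ic [].
  - destruct IH as [d1 [Hd1 H1]]. intros ic Hic; apply Hl; right; auto.
    destruct (proj2 (proj2 (proj2 (proj2 PMq))) c (app f (en i))) as [d2 [Hd2 H2]].
    apply (Hl (i, c)); left; auto.
    assert (Hp := pos_half_pow (S i)).
    exists (Rmin d1 ((/2) ^ (S i) * d2)). split.
    + apply Rmin_glb_lt; auto. apply Rmult_lt_0_compat; auto.
    + intros g Hg ic [<-|Hin].
      * simpl. apply H2. assert (T := qS_term g f i).
        assert (T2 := Rmin_r d1 ((/2) ^ (S i) * d2)).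
        assert ((/ 2) ^ S i * (q (app g (en i)) (app f (en i)) - q (app f (en i)) (app f (en i))) < (/2) ^ (S i) * d2) by lra.
        apply Rmult_lt_reg_l in H; auto. lra.
      * apply H1; auto. assert (T2 := Rmin_l d1 ((/2) ^ (S i) * d2)). lra.
Qed.

Lemma qS_L b f : way_below (FunP P) b f -> exists dl, 0 < dl /\ forall g, qS g f < qS f f + dl -> ord b g.
Proof.
  intros Hb. destruct (wb_sup (FunP P) (FunP_PO P PO) b _ _ Hb (Hset_directed f) (Hset_sup f)) as [h [[_ [l [A B]]] Hbh]].
  destruct (list_delta f l A) as [dl [Hdl H]]. exists dl; split; auto.
  intros g Hg. apply (le_trans _ (FunP_PO P PO) _ h); auto.
Qed.

Lemma PM_fun : PMprops (FunP P) qS.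
Proof.
  split; [|split; [|split; [|split]]].
  - intros; apply Qf_bounds, qi01.
  - apply qS_pm.
  - apply qS_antitone.
  - intros; apply qS_supcont; auto.
  - apply qS_L.
Qed.

End FunLevel.


Section Main.
Variable D : Poset.
Variable p : D -> D -> R.
Variable bot : D.
Variable a : forall n : nat, nat -> Dn D n.
Hypothesis PO0 : is_partial_order D.
Hypothesis DC0 : forall S, directed D S -> exists s, is_sup D S s.
Hypothesis JN0 : joins D.
Hypothesis BOT0 : forall x : D, ord bot x.
Hypothesis QP : quantifies D p.
Hypothesis P01 : forall x y : D, 0 <= p x y <= 1.
Hypothesis BAS : forall n : nat, is_basis (Dn D n) (fun b => exists i : nat, a n i = b).

Let POn' := POn D PO0 DC0 JN0.
Let DCn' := DCn D PO0 DC0 JN0.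
Let JNn' := JNn D PO0 DC0 JN0.
Let ee := e D bot.
Let e_post' := e_post D bot PO0 DC0 JN0.
Let e_pre' := e_pre D bot PO0 DC0 JN0.
Let e_mono' := e_mono D bot PO0 DC0 JN0.
Let e_cont' := e_cont D bot PO0 DC0 JN0.
Let ij_le' := ij_le D bot PO0 DC0 JN0 BOT0.

Lemma PMn : forall n, PMprops (Dn D n) (pn D p a n).
Proof.
  induction n as [|n IH].
  - split; [|split; [|split; [|split]]].
    + exact P01.
    + apply QP.
    + intros; eapply q_antitone; eauto.
    + intros; eapply q_supcont; eauto.
    + apply (q_L D p PO0 QP _ (BAS 0)).
  - exact (PM_fun (Dn D n) (pn D p a n) (a n) (botn D bot n) (POn' n) (DCn' n) (JNn' n)
            (botn_least D bot PO0 DC0 JN0 BOT0 n) (BAS n) IH).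
Qed.

Notation DI := (Dinf D bot).

Definition comp (x : DI) (n : nat) : Dn D n := proj1_sig x n.

Lemma comp_j (x : DI) n : comp x n = ee (S n) n (comp x (S n)).
Proof. unfold comp. rewrite (proj2_sig x n). apply j_e. Qed.

Lemma DI_ext (x y : DI) : (forall n, comp x n = comp y n) -> x = y.
Proof.
  destruct x as [x Hx], y as [y Hy]. unfold comp; simpl. intros H.
  assert (x = y) by (apply functional_extensionality_dep; auto). subst y.
  f_equal. apply proof_irrelevance.
Qed.

Lemma DI_le_intro (x y : DI) : (forall n, ord (comp x n) (comp y n)) -> ord x y.
Proof. intros H; exact H. Qed.

Lemma DI_le_comp (x y : DI) n : ord x y -> ord (comp x n) (comp y n).
Proof. intros H; apply H. Qed.

Lemma DI_PO : is_partial_order DI.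
Proof.
  split; [|split].
  - intros x. apply DI_le_intro; intros n. apply le_refl, POn'.
  - intros x y H1 H2. apply DI_ext. intros n. apply (le_antisym _ (POn' n)); apply DI_le_comp; auto.
  - intros x y z H1 H2. apply DI_le_intro; intros n. apply (le_trans _ (POn' n) _ (comp y n)); apply DI_le_comp; auto.
Qed.

Definition compS (S : DI -> Prop) n : Dn D n -> Prop := fun y => exists d, S d /\ y = comp d n.

Lemma compS_directed SS n : directed DI SS -> directed (Dn D n) (compS SS n).
Proof.
  intros [[x Hx] Hd]. split.
  - exists (comp x n), x; auto.
  - intros u v [d1 [H1 ->]] [d2 [H2 ->]]. destruct (Hd d1 d2 H1 H2) as [d3 [H3 [L1 L2]]].
    exists (comp d3 n); split. exists d3; auto. split; apply DI_le_comp; auto.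
Qed.

Lemma DI_sup_comp SS s : directed DI SS -> is_sup DI SS s -> forall n, is_sup (Dn D n) (compS SS n) (comp s n).
Proof.
  intros HS Hs.
  set (t := fun n => proj1_sig (constructive_indefinite_description _ (DCn' n _ (compS_directed SS n HS)))).
  assert (Ht : forall n, is_sup (Dn D n) (compS SS n) (t n)).
  { intros n; unfold t; destruct (constructive_indefinite_description _ _); auto. }
  assert (Hj : forall n, t n = j_n D bot n (t (S n))).
  { intros n. rewrite j_e. apply (sup_unique _ (POn' n) (compS SS n)); auto.
    assert (H := e_cont' (S n) n _ _ (compS_directed SS (S n) HS) (Ht (S n))).
    eapply is_sup_ext; [|exact H]. auto.
    intros y; split.
    - intros [z [[d [Hd ->]] ->]]. exists d; split; auto. symmetry; apply comp_j.
    - intros [d [Hd ->]]. exists (comp d (S n)); split. exists d; auto. apply comp_j. }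
  set (tt := exist _ t Hj : DI).
  assert (Htt : is_sup DI SS tt).
  { split.
    - intros d Hd. apply DI_le_intro; intros n. apply (Ht n). exists d; auto.
    - intros u Hu. apply DI_le_intro; intros n. apply (Ht n). intros y [d [Hd ->]]. apply DI_le_comp; auto. }
  rewrite (sup_unique _ DI_PO SS s tt Hs Htt). intros n. apply Ht.
Qed.

Definition qinf (k : nat) (x y : DI) : R := pn D p a (S k) (comp x (S k)) (comp y (S k)).

Lemma qinf01 k x y : 0 <= qinf k x y <= 1.
Proof. apply PMn. Qed.

Lemma pinf_Qf x y : pinf D bot p a x y = Qf DI qinf x y.
Proof. reflexivity. Qed.

Lemma pinf_pm : is_partial_metric DI (pinf D bot p a).
Proof.
  assert (PM := fun k => proj1 (proj2 (PMn (S k)))).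
  split; [|split; [|split; [|split]]]; intros; rewrite ?pinf_Qf.
  - apply Qf_bounds, qinf01.
  - apply Qf_le. apply qinf01. intros k. apply PM.
  - rename H into E1, H0 into E2. rewrite !pinf_Qf in *.
    assert (T1 := Qf_eq_term _ qinf qinf01 x y x x (fun k => proj1 (proj2 (PM k)) _ _) (eq_sym E1)).
    assert (Hyy : forall k, qinf k y y <= qinf k x y).
    { intros k; unfold qinf. rewrite (proj1 (proj2 (proj2 (proj2 (PM k)))) (comp x (S k))). apply PM. }
    assert (T2 := Qf_eq_term _ qinf qinf01 x y y y Hyy E2).
    assert (HS : forall k, comp x (S k) = comp y (S k)).
    { intros k. apply (proj1 (proj2 (proj2 (PM k)))); [symmetry; apply T1| apply T2]. }
    apply DI_ext. intros [|n]; auto. rewrite (comp_j x 0), (comp_j y 0), HS. reflexivity.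
  - unfold Qf. apply W_ext. intros k. apply PM.
  - apply Qf_triangle. apply qinf01. intros k. apply PM.
Qed.

Lemma pinf_antitone x y z : ord x y -> pinf D bot p a y z <= pinf D bot p a x z.
Proof.
  intros H. rewrite !pinf_Qf. apply Qf_le. apply qinf01. intros k. unfold qinf.
  apply (PMn (S k)). apply DI_le_comp; auto.
Qed.

Lemma pinf_supcont SS s z eps : directed DI SS -> is_sup DI SS s -> 0 < eps ->
  exists d, SS d /\ pinf D bot p a d z < pinf D bot p a s z + eps.
Proof.
  intros HS Hs He. rewrite !pinf_Qf. apply (Qf_supcont _ qinf qinf01 (@ord DI)); auto.
  - apply HS.
  - apply HS.
  - intros x y k Hxy. unfold qinf. apply (PMn (S k)). apply DI_le_comp; auto.
  - intros k e' He'.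
    destruct (proj1 (proj2 (proj2 (proj2 (PMn (S k))))) _ _ (comp z (S k)) e'
       (compS_directed SS (S k) HS) (DI_sup_comp SS s HS Hs (S k)) He') as [d [[x [Hx ->]] Hd]].
    exists x; split; auto.
Qed.

Definition iota (n : nat) (w : Dn D n) : DI.
Proof.
  refine (exist _ (fun k => ee n k w) _).
  intros k. rewrite j_e. symmetry. apply e_post'.
Defined.

Lemma comp_iota n w k : comp (iota n w) k = ee n k w.
Proof. reflexivity. Qed.

Lemma iota_step (z : DI) n k : ord (ee n k (comp z n)) (ee (S n) k (comp z (S n))).
Proof.
  rewrite (comp_j z n). rewrite <- (e_pre' n k). apply e_mono'. apply ij_le'.
Qed.

Lemma iota_le_a (z : DI) : forall d n k, (n + d = k)%nat -> ord (ee n k (comp z n)) (comp z k).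
Proof.
  induction d; intros n k H.
  - rewrite Nat.add_0_r in H. subst k. unfold ee. rewrite e_nn. apply le_refl, POn'.
  - apply (le_trans _ (POn' k) _ (ee (S n) k (comp z (S n)))). apply iota_step.
    apply IHd. lia.
Qed.

Lemma iota_le_comp (z : DI) n : forall d k, (n <= k + d)%nat -> ord (ee n k (comp z n)) (comp z k).
Proof.
  induction d; intros k H.
  - apply (iota_le_a z (k - n) n k). lia.
  - destruct (Nat.le_gt_cases n k).
    + apply (iota_le_a z (k - n) n k). lia.
    + rewrite <- (e_post' n k). rewrite (comp_j z k). apply e_mono'. apply IHd. lia.
Qed.

Lemma iota_le (z : DI) n : ord (iota n (comp z n)) z.
Proof.
  apply DI_le_intro. intros k. rewrite comp_iota. apply (iota_le_comp z n n k). lia.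
Qed.

Lemma iota_mono n w w' : ord w w' -> ord (iota n w) (iota n w').
Proof. intros H. apply DI_le_intro; intros k. rewrite !comp_iota. apply e_mono'; auto. Qed.

Lemma iota_chain (x : DI) : forall d n, ord (iota n (comp x n)) (iota (n + d) (comp x (n + d))).
Proof.
  induction d; intros n.
  - rewrite Nat.add_0_r. apply le_refl, DI_PO.
  - apply (le_trans _ DI_PO _ (iota (S n) (comp x (S n)))).
    + apply DI_le_intro; intros k. rewrite !comp_iota. apply iota_step.
    + replace (n + S d)%nat with (S n + d)%nat by lia. apply IHd.
Qed.

Lemma iota_sup (x : DI) : directed DI (fun y => exists n, y = iota n (comp x n)) /\
                           is_sup DI (fun y => exists n, y = iota n (comp x n)) x.
Proof.
  split; [split|split].
  - exists (iota 0 (comp x 0)), 0%nat; auto.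
  - intros u v [n ->] [m ->]. exists (iota (n + m) (comp x (n + m))). split. eauto.
    split. apply iota_chain. replace (n + m)%nat with (m + n)%nat by lia. apply iota_chain.
  - intros y [n ->]. apply iota_le.
  - intros u Hu. apply DI_le_intro; intros k.
    assert (H := DI_le_comp _ _ k (Hu (iota k (comp x k)) (ex_intro _ k eq_refl))).
    rewrite comp_iota in H. unfold ee in H. rewrite e_nn in H. exact H.
Qed.

Lemma iota_cont n : cont (Dn D n) DI (iota n).
Proof.
  intros S s HS Hs. split.
  - intros y [w [Hw ->]]. apply iota_mono. apply Hs; auto.
  - intros u Hu. apply DI_le_intro; intros k. rewrite comp_iota.
    destruct (e_cont' n k S s HS Hs) as [_ Hl]. apply Hl.
    intros y [w [Hw ->]]. assert (H := DI_le_comp _ _ k (Hu (iota n w) (ex_intro _ w (conj Hw eq_refl)))).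
    rewrite comp_iota in H. exact H.
Qed.

Lemma pinf_term (z x : DI) k : (/2) ^ (S k) * (qinf k z x - qinf k x x) <= pinf D bot p a z x - pinf D bot p a x x.
Proof.
  rewrite !pinf_Qf. apply (Qf_diff_term _ qinf qinf01 z x x x).
  intros j. unfold qinf. assert (PM := proj1 (proj2 (PMn (S j)))).
  rewrite (proj1 (proj2 (proj2 (proj2 PM))) (comp z (S j))). apply PM.
Qed.

Theorem main_quant : quantifies DI (pinf D bot p a).
Proof.
  split; [apply pinf_pm|]. intros U. split.
  - intros [Hup Hin] x Hx.
    destruct (iota_sup x) as [Hd Hs].
    destruct (Hin _ _ Hd Hs Hx) as [y [[n ->] Hy]].
    assert (HU : U (iota (S n) (comp x (S n)))).
    { apply (Hup _ _ Hy). replace (S n) with (n + 1)%nat by lia. apply iota_chain. }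
    destruct (BAS (S n) (comp x (S n))) as [Hd' Hs'].
    destruct (Hin _ _ (directed_img _ _ _ _ (POn' (S n)) (iota_cont (S n)) Hd') (iota_cont (S n) _ _ Hd' Hs') HU)
      as [y' [[b [[_ Hb] ->]] Hyb]].
    destruct (proj2 (proj2 (proj2 (proj2 (PMn (S n))))) b _ Hb) as [dl [Hdl Hball]].
    exists x, ((/2) ^ (S n) * dl). assert (Hp := pos_half_pow (S n)). split; [apply Rmult_lt_0_compat; auto|].
    split.
    + unfold pball. assert (0 < (/2) ^ (S n) * dl) by (apply Rmult_lt_0_compat; auto). lra.
    + intros z Hz. unfold pball in Hz.
      assert (T := pinf_term z x n).
      assert (Hb' : ord b (comp z (S n))).
      { apply Hball. unfold qinf in T.
        assert ((/ 2) ^ S n * (pn D p a (S n) (comp z (S n)) (comp x (S n)) - pn D p a (S n) (comp x (S n)) (comp x (S n))) < (/2) ^ (S n) * dl) by lra.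
        apply Rmult_lt_reg_l in H; auto. lra. }
      apply (Hup _ _ Hyb). apply (le_trans _ DI_PO _ (iota (S n) (comp z (S n)))).
      apply iota_mono; auto. apply iota_le.
  - intros Ho. split.
    + intros x y Hx Hxy. destruct (Ho x Hx) as [c [r [Hr [Hc Hsub]]]].
      apply Hsub. unfold pball in *. assert (H := pinf_antitone x y c Hxy). lra.
    + intros SS s HS Hs HU. destruct (Ho s HU) as [c [r [Hr [Hc Hsub]]]]. unfold pball in Hc.
      destruct (pinf_supcont SS s c (pinf D bot p a c c + r - pinf D bot p a s c) HS Hs) as [d [Hd Hd']]; [lra|].
      exists d; split; auto. apply Hsub. unfold pball. lra.
Qed.

End Main.

Lemma joins_of_bc (D : Poset) : is_partial_order D -> bounded_complete D -> joins D.
Proof.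
  intros PO BC x y u Hx Hy.
  destruct (BC (cons x (cons y nil))) as [s Hs].
  - exists u. intros z [<-|[<-|[]]]; auto.
  - exists s. eapply is_sup_ext; [|exact Hs]. auto.
    intros z; simpl; split; [intros [H|[H|[]]]; subst; auto | intros [H|H]; subst; auto].
Qed.

Theorem mainTheorem8 (D : Poset) (p : D -> D -> R) (bot : D)
  (a : forall n : nat, nat -> Dn D n) :
  is_domain D ->
  bounded_complete D ->
  (forall x : D, ord bot x) ->
  quantifies D p ->
  (forall x y : D, 0 <= p x y <= 1) ->
  (forall n : nat, is_basis (Dn D n) (fun b => exists i : nat, a n i = b)) ->
  quantifies (Dinf D bot) (pinf D bot p a).
Proof.
  intros [[PO DC] _] BC BOT QP P01 BAS.
  apply (main_quant D p bot a PO DC (joins_of_bc D PO BC) BOT QP P01 BAS).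
Qed.
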